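(* Let $G$ be a graph with no induced $P_7$, $C_4$, $C_6$ or $C_7$, let $H=(B_1,\dots,B_5)$ be a nice blowup of $C_5$ in $G$, and let $i\in\{1,\dots,5\}$. If $a-b-c$ is an induced path in $G[A_2(i)]$, then $N_{A'_3(j)}(a)\subseteq N_{A'_3(j)}(b)$ and $N_{A'_3(j)}(c)\subseteq N_{A'_3(j)}(b)$ for each $j\in\{i,i+1\}$.
   Context: Indices modulo $5$. A nice blowup of $C_5$ is a tuple $(B_1,\dots,B_5)$ of pairwise disjoint cliques such that every vertex of $B_j$ has a neighbor in $B_{j-1}$ and in $B_{j+1}$, $B_j$ is anticomplete to $B_{j+2}$, and there are no $a\in B_j$, distinct $b,c\in B_{j+1}$, $d\in B_{j+2}$ with $G[\{a,b,c,d\}]\cong P_4$; $V(H)=\bigcup B_j$. For $v\notin V(H)$, $\operatorname{supp}(v)$ is the set of $j$ such that $v$ has a neighbor in $B_j$. $A_2(i)=\{v\notin V(H):\operatorname{supp}(v)=\{i,i+1\}\}$, $A_3(j)=\{v\notin V(H):\operatorname{supp}(v)=\{j-1,j,j+1\}\}$, $A'_3(j)=A_3(j)\cup B_j$; $N_S(v)$ denotes the neighbors of $v$ in $S$. *)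

(* Defs.v *)
From mathcomp Require Import all_boot.
Set Implicit Arguments. Unset Strict Implicit. Unset Printing Implicit Defensive.

Section Graphs.
Variable T : finType.
Variable adj : rel T.

Definition simple_graph := symmetric adj /\ irreflexive adj.

Definition is_induced_path (k : nat) (f : 'I_k -> T) :=
  injective f /\ forall i j : 'I_k, adj (f i) (f j) = ((i.+1 == j) || (j.+1 == i)).

Definition is_induced_cycle (k : nat) (f : 'I_k -> T) :=
  injective f /\ forall i j : 'I_k,
    adj (f i) (f j) = ((i.+1 %% k == j) || (j.+1 %% k == i)).

Definition has_induced_P (k : nat) := exists f : 'I_k -> T, is_induced_path f.
Definition has_induced_C (k : nat) := exists f : 'I_k -> T, is_induced_cycle f.

Definition induces_P4 (S : {set T}) :=
  exists f : 'I_4 -> T, is_induced_path f /\ [set f i | i : 'I_4] = S.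

Definition clique (S : {set T}) :=
  forall u v, u \in S -> v \in S -> u != v -> adj u v.

Definition nx (j : 'I_5) : 'I_5 := ordS j.
Definition pv (j : 'I_5) : 'I_5 := ord_pred j.

Definition nice_blowup_C5 (B : 'I_5 -> {set T}) :=
  [/\ (forall j k, j != k -> [disjoint B j & B k]),
      (forall j, clique (B j)),
      (forall j v, v \in B j ->
          (exists2 u, u \in B (pv j) & adj v u) /\
          (exists2 u, u \in B (nx j) & adj v u)),
      (forall j u v, u \in B j -> v \in B (nx (nx j)) -> ~~ adj u v) &
      (forall j a b c d, a \in B j -> b \in B (nx j) -> c \in B (nx j) ->
          b != c -> d \in B (nx (nx j)) -> ~ induces_P4 [set a; b; c; d])].

Definition VH (B : 'I_5 -> {set T}) : {set T} := \bigcup_(j < 5) B j.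

Definition supp (B : 'I_5 -> {set T}) (v : T) : {set 'I_5} :=
  [set j | [exists u in B j, adj v u]].

Definition A2 (B : 'I_5 -> {set T}) (i : 'I_5) : {set T} :=
  [set v | (v \notin VH B) && (supp B v == [set i; nx i])].

Definition A3 (B : 'I_5 -> {set T}) (j : 'I_5) : {set T} :=
  [set v | (v \notin VH B) && (supp B v == [set pv j; j; nx j])].

Definition A3' (B : 'I_5 -> {set T}) (j : 'I_5) : {set T} := A3 B j :|: B j.

Definition nbhd_in (S : {set T}) (v : T) : {set T} := [set u in S | adj v u].

End Graphs.

(* Main.v *)
Require Import Defs.
From mathcomp Require Import all_boot.

Ltac adjtac sym irr :=
  first [ by rewrite irr | done | by rewrite sym | by apply/negbTE
        | by rewrite sym; apply/negbTE ].

Lemma P7_lem (T : finType) (adj : rel T) (v0 v1 v2 v3 v4 v5 v6 : T) :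
  symmetric adj -> irreflexive adj ->
  adj v0 v1 -> adj v1 v2 -> adj v2 v3 -> adj v3 v4 -> adj v4 v5 -> adj v5 v6 ->
  ~~ adj v0 v2 -> ~~ adj v0 v3 -> ~~ adj v0 v4 -> ~~ adj v0 v5 -> ~~ adj v0 v6 ->
  ~~ adj v1 v3 -> ~~ adj v1 v4 -> ~~ adj v1 v5 -> ~~ adj v1 v6 ->
  ~~ adj v2 v4 -> ~~ adj v2 v5 -> ~~ adj v2 v6 ->
  ~~ adj v3 v5 -> ~~ adj v3 v6 -> ~~ adj v4 v6 ->
  has_induced_P adj 7.
Proof.
move=> sym irr *.
pose s := [:: v0; v1; v2; v3; v4; v5; v6].
have H : forall i j : 'I_7, adj (nth v0 s i) (nth v0 s j) = ((i.+1 == j) || (j.+1 == i)).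
  move=> [[|[|[|[|[|[|[|k]]]]]]] Hi] [[|[|[|[|[|[|[|l]]]]]]] Hj] //=; adjtac sym irr.
exists (fun i => nth v0 s i); split => //.
move=> i j e.
have pat : forall m : 'I_7, ((i.+1 == m) || (m.+1 == i)) = ((j.+1 == m) || (m.+1 == j)).
  by move=> m; rewrite -!H e.
clear e H.
move: i j pat => [[|[|[|[|[|[|[|k]]]]]]] Hi] [[|[|[|[|[|[|[|l]]]]]]] Hj] pat //;
  try (by apply/val_inj);
  first [ by move: (pat (@Ordinal 7 0 isT))
        | by move: (pat (@Ordinal 7 1 isT))
        | by move: (pat (@Ordinal 7 2 isT))
        | by move: (pat (@Ordinal 7 3 isT))
        | by move: (pat (@Ordinal 7 4 isT))
        | by move: (pat (@Ordinal 7 5 isT))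
        | by move: (pat (@Ordinal 7 6 isT)) ].
Qed.

Lemma C4_lem (T : finType) (adj : rel T) (w0 w1 w2 w3 : T) :
  symmetric adj -> irreflexive adj ->
  adj w0 w1 -> adj w1 w2 -> adj w2 w3 -> adj w3 w0 ->
  ~~ adj w0 w2 -> ~~ adj w1 w3 -> w0 != w2 -> w1 != w3 ->
  has_induced_C adj 4.
Proof.
move=> sym irr e01 e12 e23 e30 n02 n13 d02 d13.
pose s := [:: w0; w1; w2; w3].
have H : forall i j : 'I_4, adj (nth w0 s i) (nth w0 s j) =
    ((i.+1 %% 4 == j) || (j.+1 %% 4 == i)).
  move=> [[|[|[|[|k]]]] Hi] [[|[|[|[|l]]]] Hj] //=; adjtac sym irr.
exists (fun i => nth w0 s i); split => //.
move=> i j e.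
have pat : forall m : 'I_4, ((i.+1 %% 4 == m) || (m.+1 %% 4 == i)) =
     ((j.+1 %% 4 == m) || (m.+1 %% 4 == j)).
  by move=> m; rewrite -!H e.
move: i j pat e => [[|[|[|[|k]]]] Hi] [[|[|[|[|l]]]] Hj] pat //= e;
  try (by apply/val_inj);
  first [ by rewrite e eqxx in d02 | by rewrite e eqxx in d13
        | by move: (pat (@Ordinal 4 0 isT))
        | by move: (pat (@Ordinal 4 1 isT))
        | by move: (pat (@Ordinal 4 2 isT))
        | by move: (pat (@Ordinal 4 3 isT)) ].
Qed.

Lemma core (T : finType) (adj : rel T) (a b c x p1 p2 p3 : T) :
  simple_graph adj -> ~ has_induced_P adj 7 -> ~ has_induced_C adj 4 ->
  adj a b -> adj b c -> ~~ adj a c -> a != c -> adj x a -> ~~ adj x b ->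
  adj x p1 -> adj p1 p2 -> adj p2 p3 ->
  ~~ adj p1 a -> ~~ adj p1 b -> ~~ adj p1 c ->
  ~~ adj p2 a -> ~~ adj p2 b -> ~~ adj p2 c ->
  ~~ adj p3 a -> ~~ adj p3 b -> ~~ adj p3 c ->
  ~~ adj x p2 -> ~~ adj x p3 -> ~~ adj p1 p3 -> False.
Proof.
move=> [sym irr] nP7 nC4 eab ebc nac dac exa nxb ex1 e12 e23
  n1a n1b n1c n2a n2b n2c n3a n3b n3c nx2 nx3 n13.
case: (boolP (adj c x)) => hcx.
  apply: nC4; apply: (@C4_lem _ _ x a b c) => //.
  by apply/eqP => exb; rewrite -exb sym ex1 in n1b.
apply: nP7; apply: (@P7_lem _ _ p3 p2 p1 x a b c) => //; try by rewrite sym.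
Qed.

Lemma dir (T : finType) (adj : rel T) (B : 'I_5 -> {set T}) (d : 'I_5 -> 'I_5)
    (j : 'I_5) (a b c x : T) :
  simple_graph adj -> ~ has_induced_P adj 7 -> ~ has_induced_C adj 4 ->
  (forall k v, v \in B k -> exists2 u, u \in B (d k) & adj v u) ->
  (forall k u v, u \in B k -> v \in B (d (d k)) -> ~~ adj u v) ->
  adj a b -> adj b c -> ~~ adj a c -> a != c -> adj x a ->
  (exists2 u, u \in B (d j) & adj x u) ->
  (forall u, u \in B (d (d j)) -> ~~ adj x u) ->
  (forall u, u \in B (d (d (d j))) -> ~~ adj x u) ->
  (forall y u, y \in [:: a; b; c] ->
      u \in B (d j) :|: B (d (d j)) :|: B (d (d (d j))) -> ~~ adj y u) ->
  adj x b.
Proof.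
move=> sg nP7 nC4 hd hfar eab ebc nac dac exa [p1 hp1 ex1] hx2 hx3 habc.
case: (boolP (adj x b)) => // nxb; exfalso.
have [p2 hp2 e12] := hd _ _ hp1.
have [p3 hp3 e23] := hd _ _ hp2.
have sym := sg.1.
have hy : forall p, p \in B (d j) :|: B (d (d j)) :|: B (d (d (d j))) ->
    [/\ ~~ adj p a, ~~ adj p b & ~~ adj p c].
  move=> p hp; rewrite !(sym p); split; apply: habc => //; by rewrite !inE eqxx ?orbT.
have [n1a n1b n1c] : [/\ ~~ adj p1 a, ~~ adj p1 b & ~~ adj p1 c] by apply: hy; rewrite !inE hp1.
have [n2a n2b n2c] : [/\ ~~ adj p2 a, ~~ adj p2 b & ~~ adj p2 c] by apply: hy; rewrite !inE hp2 ?orbT.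
have [n3a n3b n3c] : [/\ ~~ adj p3 a, ~~ adj p3 b & ~~ adj p3 c] by apply: hy; rewrite !inE hp3 ?orbT.
apply: (@core _ adj a b c x p1 p2 p3) => //; [exact: hx2 | exact: hx3 | exact: hfar hp1 hp3].
Qed.

Lemma supp_adj (T : finType) (adj : rel T) (B : 'I_5 -> {set T}) y u q :
  u \in B q -> adj y u -> q \in supp adj B y.
Proof. by move=> hu e; rewrite inE; apply/existsP; exists u; rewrite hu. Qed.

Lemma finish (T : finType) (adj : rel T) (B : 'I_5 -> {set T}) (d : 'I_5 -> 'I_5)
    (i j : 'I_5) (a b c : T) :
  simple_graph adj -> ~ has_induced_P adj 7 -> ~ has_induced_C adj 4 ->
  (forall k v, v \in B k -> exists2 u, u \in B (d k) & adj v u) ->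
  (forall k u v, u \in B k -> v \in B (d (d k)) -> ~~ adj u v) ->
  (forall k, d (d (d (d (d k)))) = k) ->
  d j \in [set pv j; j; nx j] ->
  d (d j) \notin [set pv j; j; nx j] ->
  d (d (d j)) \notin [set pv j; j; nx j] ->
  (forall q, q \in [:: d j; d (d j); d (d (d j))] -> q \notin [set i; nx i]) ->
  a \in A2 adj B i -> b \in A2 adj B i -> c \in A2 adj B i ->
  adj a b -> adj b c -> ~~ adj a c -> a != c ->
  nbhd_in adj (A3' adj B j) a \subset nbhd_in adj (A3' adj B j) b.
Proof.
move=> sg nP7 nC4 hd hfar hd5 fd1 fd2 fd3 fs ha hb hc eab ebc nac dac.
have sym := sg.1.
apply/subsetP => x; rewrite /nbhd_in /A3' !inE => /andP [hxA eax]; rewrite hxA /=.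
rewrite sym; apply: (@dir _ adj B d j a b c x) => //; first by rewrite sym.
- case/orP: hxA => [hx|hx]; last exact: hd.
  move: hx; rewrite ?inE => /andP [_ /eqP hs].
  have : d j \in supp adj B x by rewrite hs.
  by rewrite inE => /existsP [u /andP [hu e]]; exists u.
- move=> u hu; case/orP: hxA => [hx|hx]; last exact: hfar hx hu.
  move: hx; rewrite ?inE => /andP [_ /eqP hs].
  apply/negP => e; have := @supp_adj _ adj B _ _ _ hu e; rewrite hs => h.
  by rewrite h in fd2.
- move=> u hu; case/orP: hxA => [hx|hx].
    move: hx; rewrite ?inE => /andP [_ /eqP hs].
    apply/negP => e; have := @supp_adj _ adj B _ _ _ hu e; rewrite hs => h.
    by rewrite h in fd3.
  rewrite sym; apply: (hfar _ _ _ hu); by rewrite hd5.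
- move=> y u hy hu; apply/negP => e.
  have hyA : y \in A2 adj B i.
    by rewrite !inE in hy; case/or3P: hy => /eqP ->.
  move: hyA; rewrite /A2 inE => /andP [_ /eqP hs].
  move: hu; rewrite !inE -!orbA => /or3P [] hu.
  + by have := @supp_adj _ adj B _ _ _ hu e; rewrite hs; apply/negP/fs; rewrite inE eqxx.
  + by have := @supp_adj _ adj B _ _ _ hu e; rewrite hs; apply/negP/fs; rewrite !inE eqxx ?orbT.
  + by have := @supp_adj _ adj B _ _ _ hu e; rewrite hs; apply/negP/fs; rewrite !inE eqxx ?orbT.
Qed.

Lemma f1 (k : 'I_5) : nx (nx (pv (pv k))) = k.
Proof. by case: k => [[|[|[|[|[|k]]]]] Hk] //; apply/val_inj. Qed.
Lemma pv5 (k : 'I_5) : pv (pv (pv (pv (pv k)))) = k.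
Proof. by case: k => [[|[|[|[|[|k]]]]] Hk] //; apply/val_inj. Qed.
Lemma nx5 (k : 'I_5) : nx (nx (nx (nx (nx k)))) = k.
Proof. by case: k => [[|[|[|[|[|k]]]]] Hk] //; apply/val_inj. Qed.
Lemma pv_f1 (i : 'I_5) : pv i \in [set pv i; i; nx i].
Proof. by rewrite !inE eqxx. Qed.
Lemma pv_f2 (i : 'I_5) : pv (pv i) \notin [set pv i; i; nx i].
Proof. rewrite !inE. by case: i => [[|[|[|[|[|k]]]]] Hk]. Qed.
Lemma pv_f3 (i : 'I_5) : pv (pv (pv i)) \notin [set pv i; i; nx i].
Proof. rewrite !inE. by case: i => [[|[|[|[|[|k]]]]] Hk]. Qed.
Lemma pv_fs (i : 'I_5) q : q \in [:: pv i; pv (pv i); pv (pv (pv i))] -> q \notin [set i; nx i].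
Proof. rewrite !inE. by case: i => [[|[|[|[|[|k]]]]] Hk] //; case/or3P => /eqP ->. Qed.
Lemma nx_f1 (i : 'I_5) : nx (nx i) \in [set pv (nx i); nx i; nx (nx i)].
Proof. by rewrite !inE eqxx ?orbT. Qed.
Lemma nx_f2 (i : 'I_5) : nx (nx (nx i)) \notin [set pv (nx i); nx i; nx (nx i)].
Proof. rewrite !inE. by case: i => [[|[|[|[|[|k]]]]] Hk]. Qed.
Lemma nx_f3 (i : 'I_5) : nx (nx (nx (nx i))) \notin [set pv (nx i); nx i; nx (nx i)].
Proof. rewrite !inE. by case: i => [[|[|[|[|[|k]]]]] Hk]. Qed.
Lemma nx_fs (i : 'I_5) q : q \in [:: nx (nx i); nx (nx (nx i)); nx (nx (nx (nx i)))] -> q \notin [set i; nx i].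
Proof. rewrite !inE. by case: i => [[|[|[|[|[|k]]]]] Hk] //; case/or3P => /eqP ->. Qed.

Theorem lemma7p3 (T : finType) (adj : rel T) (B : 'I_5 -> {set T}) (i : 'I_5)
    (a b c : T) :
  simple_graph adj ->
  ~ has_induced_P adj 7 -> ~ has_induced_C adj 4 ->
  ~ has_induced_C adj 6 -> ~ has_induced_C adj 7 ->
  nice_blowup_C5 adj B ->
  a \in A2 adj B i -> b \in A2 adj B i -> c \in A2 adj B i ->
  adj a b -> adj b c -> ~~ adj a c -> a != c ->
  forall j, j \in [set i; nx i] ->
    nbhd_in adj (A3' adj B j) a \subset nbhd_in adj (A3' adj B j) b /\
    nbhd_in adj (A3' adj B j) c \subset nbhd_in adj (A3' adj B j) b.
Proof.
move=> sg nP7 nC4 _ _ [_ _ hnb hfar _] ha hb hc eab ebc nac dac j.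
have sym := sg.1.
have hdp : forall k v, v \in B k -> exists2 u, u \in B (pv k) & adj v u.
  by move=> k v /hnb [].
have hdn : forall k v, v \in B k -> exists2 u, u \in B (nx k) & adj v u.
  by move=> k v /hnb [].
have hfp : forall k u v, u \in B k -> v \in B (pv (pv k)) -> ~~ adj u v.
  move=> k u v hu hv; rewrite sym; apply: (hfar _ _ _ hv); by rewrite f1.
have eba : adj c b by rewrite sym.
have ecb : adj b a by rewrite sym.
have nca : ~~ adj c a by rewrite sym.
have dca : c != a by rewrite eq_sym.
rewrite !inE => /orP [] /eqP ->; split.
- exact: (@finish _ adj B pv i i a b c sg nP7 nC4 hdp hfp pv5 (pv_f1 i) (pv_f2 i) (pv_f3 i) (@pv_fs i) ha hb hc eab ebc nac dac).
- exact: (@finish _ adj B pv i i c b a sg nP7 nC4 hdp hfp pv5 (pv_f1 i) (pv_f2 i) (pv_f3 i) (@pv_fs i) hc hb ha eba ecb nca dca).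
- exact: (@finish _ adj B nx i (nx i) a b c sg nP7 nC4 hdn hfar nx5 (nx_f1 i) (nx_f2 i) (nx_f3 i) (@nx_fs i) ha hb hc eab ebc nac dac).
- exact: (@finish _ adj B nx i (nx i) c b a sg nP7 nC4 hdn hfar nx5 (nx_f1 i) (nx_f2 i) (nx_f3 i) (@nx_fs i) hc hb ha eba ecb nca dca).
Qed.
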